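(* Let $M\subset X$ be nonempty, $F:X\rightrightarrows Y$ with nonempty values, and $\bar x\in M\cap M'$ such that $F(\bar x)$ is $K$-sequentially compact and $\bar x$ is a local ideal minimum for $F$ on $M$. Suppose there are $e\in K\setminus\{0\}$, $r>0$, $\ell>0$ such that for all $u\in(X\setminus M)\cap B(\bar x,r)$ and $v\in M\cap B(\bar x,r)$, $$F(u)+\ell\|u-v\|e\subset F(v)+K.$$ Then $\bar x$ is a local ideal minimum on $X$ (i.e., without constraints) for the set-valued map $G:X\rightrightarrows Y$, $G(x)=F(x)+\ell d_M(x)e$.
   Context: $X,Y$ are real normed spaces, $K\subset Y$ a pointed closed convex cone, $B(x,r)$ the open ball, $M'$ the set of accumulation points of $M$, $d_M(x)=\inf_{m\in M}\|x-m\|$. A nonempty $A\subset Y$ is $K$-sequentially compact if for every $(a_n)\subset A$ there is $(c_n)\subset K$ such that $(a_n-c_n)$ has a subsequence converging to an element of $A$. For nonempty $S\subset X$, $\bar x\in S$ is a local ideal minimum for $F$ on $S$ if there is $\varepsilon>0$ such that $F(\bar x)\not\subset F(x)+(Y\setminus -K)$ for all $x\in S\cap B(\bar x,\varepsilon)\setminus\{\bar x\}$; ''on $X$'' means $S=X$. *)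

(* Defs.v *)
From HB Require Import structures.
From mathcomp Require Import all_boot all_order all_algebra.
From mathcomp Require Import all_classical all_reals all_analysis.
Set Implicit Arguments. Unset Strict Implicit. Unset Printing Implicit Defensive.
Import Order.TTheory GRing.Theory Num.Theory.
Import numFieldNormedType.Exports.
Local Open Scope classical_set_scope.
Local Open Scope ring_scope.

Section Defs.
Variable R : realType.

Definition pointed_closed_convex_cone (Y : normedModType R) (K : set Y) : Prop :=
  [/\ K 0,
      (forall (t : R) k, 0 <= t -> K k -> K (t *: k)),
      (forall (t : R) k1 k2, 0 <= t <= 1 -> K k1 -> K k2 -> K (t *: k1 + (1 - t) *: k2)),
      (forall k, K k -> K (- k) -> k = 0) &
      closed K].

Definition oball (X : normedModType R) (x : X) (r : R) : set X :=
  [set y | `|x - y| < r].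

Definition accum_point (X : normedModType R) (M : set X) (x : X) : Prop :=
  forall eps : R, 0 < eps -> exists m, [/\ M m, m != x & `|x - m| < eps].

Definition distM (X : normedModType R) (M : set X) (x : X) : R :=
  inf [set `|x - m| | m in M].

Definition setsum (Y : normedModType R) (A B : set Y) : set Y :=
  [set a + b | a in A & b in B].

Definition K_seq_compact (Y : normedModType R) (K A : set Y) : Prop :=
  A !=set0 /\
  forall a : nat -> Y, (forall n, A (a n)) ->
    exists c : nat -> Y, (forall n, K (c n)) /\
      exists phi : nat -> nat, (forall n, (phi n < phi n.+1)%N) /\
        exists y, A y /\ (fun n => a (phi n) - c (phi n)) @ \oo --> y.

Definition local_ideal_min (X Y : normedModType R) (K : set Y)
  (F : X -> set Y) (S : set X) (xb : X) : Prop :=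
  S xb /\
  exists eps : R, 0 < eps /\
    forall x, S x -> oball xb eps x -> x != xb ->
      ~ (F xb `<=` setsum (F x) [set y | ~ K (- y)]).

End Defs.

(* Main.v *)
Require Import Defs.
From HB Require Import structures.
From mathcomp Require Import all_boot all_order all_algebra.
From mathcomp Require Import all_classical all_reals all_analysis.
From mathcomp Require Import ring lra.
Import Order.TTheory GRing.Theory Num.Theory.
Import numFieldNormedType.Exports.
Local Open Scope classical_set_scope.
Local Open Scope ring_scope.

Lemma h1 (R : realType) n : harmonic n <= 1 :> R.
Proof. rewrite /harmonic /=. rewrite invf_le1 // ?ler1n // ltr0n. Qed.
Lemma h2 (R : realType) n m : (n <= m)%N -> harmonic m <= harmonic n :> R.
Proof. move=> nm. rewrite /harmonic /= lef_pV2 ?posrE ?ltr0n // ler_nat ltnS. exact nm. Qed.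

Lemma phi_ge (phi : nat -> nat) : (forall n, (phi n < phi n.+1)%N) -> forall n, (n <= phi n)%N.
Proof. move=> H; elim=> [//|n IH]. exact: leq_ltn_trans IH (H n). Qed.

Lemma cone_add (R : realType) (Y : normedModType R) (K : set Y) :
  pointed_closed_convex_cone K -> forall a b, K a -> K b -> K (a + b).
Proof.
case=> _ Hs Hc _ _ a b Ka Kb.
have h : 0 <= (2:R)^-1 <= 1 by apply/andP; split; rewrite ?invr_ge0 // invf_le1 // ler1n.
have := Hs 2 _ (ler0n _ 2) (Hc _ _ _ h Ka Kb).
have -> : 1 - (2:R)^-1 = 2^-1 by field.
by rewrite -scalerDr scalerA mulfV ?pnatr_eq0 // scale1r.
Qed.

Lemma alg (V : zmodType) (f A B y c : V) : f + A - (y - c) + (B - A) = f + B - y + c.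
Proof.
rewrite addrC addrA (addrC f A) addrA subrK opprB (addrC B f) addrA.
by rewrite [RHS]addrAC.
Qed.

Lemma tri (R : realType) (X : normedModType R) (x y z : X) :
  `|x - z| <= `|x - y| + `|y - z|.
Proof. by have := ler_normD (x - y) (y - z); rewrite addrA subrK. Qed.

Lemma dist_lb (R : realType) (X : normedModType R) (M : set X) x :
  has_lbound [set `|x - m| | m in M].
Proof. by exists 0 => _ [m _ <-]. Qed.

Lemma dist_le (R : realType) (X : normedModType R) (M : set X) x m :
  M m -> distM M x <= `|x - m|.
Proof. move=> Mm; have := ge_inf (@dist_lb _ _ M x); rewrite /distM; apply; by exists m. Qed.

Lemma dist_ge0 (R : realType) (X : normedModType R) (M : set X) x :
  M !=set0 -> 0 <= distM M x.
Proof. case=> m Mm; apply: lb_le_inf; first by exists `|x - m|, m. by move=> _ [? _ <-]. Qed.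

Lemma ideal_ex (R : realType) (Y : normedModType R) (K A B : set Y) :
  ~ (A `<=` setsum B [set y | ~ K (- y)]) ->
  exists2 y, A y & forall f, B f -> K (f - y).
Proof.
move=> Hn; apply: contrapT => nex; apply: Hn => y Ay; apply: contrapT => ns.
apply: nex; exists y => // f Bf; apply: contrapT => nK; apply: ns.
exists f => //; exists (y - f); last by rewrite addrC subrK.
by rewrite /= opprB.
Qed.

Theorem mainTheorem15 (R : realType) (X Y : normedModType R) (K : set Y)
  (M : set X) (F : X -> set Y) (xb : X) (e : Y) (r l : R) :
  pointed_closed_convex_cone K ->
  M !=set0 ->
  (forall x, F x !=set0) ->
  M xb -> accum_point M xb ->
  K_seq_compact K (F xb) ->
  local_ideal_min K F M xb ->
  K e -> e != 0 -> 0 < r -> 0 < l ->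
  (forall u v, ~ M u -> oball xb r u -> M v -> oball xb r v ->
     [set y + (l * `|u - v|) *: e | y in F u] `<=` setsum (F v) K) ->
  local_ideal_min K (fun x => [set y + (l * distM M x) *: e | y in F x]) setT xb.
Proof.
move=> cone Mne Fne Mxb acc Kc [_ [eps [eps0 Hmin]]] Ke e0 r0 l0 H.
have d0 : distM M xb = 0.
  apply/eqP; rewrite eq_le dist_ge0 // andbT.
  by have := @dist_le _ _ M xb xb Mxb; rewrite subrr normr0.
split => //.
pose d3 := Num.min r eps / 3.
have d3p : 0 < d3 by rewrite divr_gt0 // lt_min r0.
have d3r : d3 * 3 <= r by rewrite /d3 mulfVK ?pnatr_eq0 // ge_min lexx.
have d3e : d3 * 3 <= eps by rewrite /d3 mulfVK ?pnatr_eq0 // ge_min lexx orbT.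
exists d3; split => // x _ bx xnxb.
suff [y Fy Hy] : exists2 y, F xb y &
    forall f, F x f -> K (f + (l * distM M x) *: e - y).
  have Gy : [set y + (l * distM M xb) *: e | y in F xb] y.
    by exists y => //; rewrite d0 mulr0 scale0r addr0.
  move=> sub; have [g [f Ff <-] [z nz] gz] := sub y Gy.
  apply: nz; have := Hy f Ff; rewrite -gz /=.
  by rewrite opprD addrA subrr add0r.
have bx' : `|xb - x| < d3 by exact: bx.
case: (pselect (M x)) => Mx.
  have xe : oball xb eps x by rewrite /oball /=; lra.
  have [y Fy Hy] := @ideal_ex _ _ K _ _ (Hmin x Mx xe xnxb).
  exists y => // f Ff.
  have -> : distM M x = 0.
    apply/eqP; rewrite eq_le dist_ge0 // andbT.
    by have := @dist_le _ _ M x x Mx; rewrite subrr normr0.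
  by rewrite mulr0 scale0r addr0; exact: Hy.
have dge := @dist_ge0 _ _ M x Mne.
have dle : distM M x <= `|x - xb| := @dist_le _ _ M x xb Mxb.
have nxs : `|x - xb| = `|xb - x| by rewrite distrC.
have vex : forall n, exists v, [/\ M v, v != xb &
    `|x - v| < distM M x + d3 * harmonic n].
  move=> n; have hp : 0 < d3 * harmonic n / 2.
    by rewrite divr_gt0 // mulr_gt0 // harmonic_gt0.
  have hinf : has_inf [set `|x - m| | m in M].
    by split; [case: Mne => m Mm; exists `|x - m|, m | exact: dist_lb].
  have [_ [m Mm <-] lt] := inf_adherent hp hinf.
  rewrite -/(distM M x) in lt.
  case: (eqVneq m xb) => [mxb | mnxb].
    have [m' [Mm' m'n lt']] := acc _ hp.
    exists m'; split => //.
    have := @tri _ _ x xb m'; rewrite mxb in lt; lra.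
  by exists m; split => //; lra.
case: (choice vex) => v vP.
have vball : forall n, `|xb - v n| < d3 * 3.
  move=> n; have [_ _ lt] := vP n.
  have := @tri _ _ xb x (v n); have := h1 R n.
  have : d3 * harmonic n <= d3 by apply: ler_piMr; [exact: ltW | exact: h1].
  lra.
have yex : forall n, exists y, F xb y /\ forall f, F (v n) f -> K (f - y).
  move=> n; have [Mv vn _] := vP n.
  have ve : oball xb eps (v n) by rewrite /oball /=; have := vball n; lra.
  have [y Fy Hy] := @ideal_ex _ _ K _ _ (Hmin (v n) Mv ve vn).
  by exists y.
case: (choice yex) => y yP.
case: Kc => _ /(_ y (fun n => (yP n).1)) [c [Kcn [phi [phiinc [ys [Fys cvgy]]]]]].
exists ys => // f Ff.
set dd := distM M x.
pose s n := l * (`|x - v n| - dd).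
have Kn : forall n, K (f + (l * dd) *: e - (y n - c n) + s n *: e).
  move=> n; have [Mv vn lt] := vP n.
  have xr : oball xb r x by rewrite /oball /=; lra.
  have vr : oball xb r (v n) by rewrite /oball /=; have := vball n; lra.
  have [f' Ff' [k Kk eq]] := H x (v n) Mx xr Mv vr (f + (l * `|x - v n|) *: e)
    (ex_intro2 _ _ f Ff erefl).
  have K1 := (yP n).2 f' Ff'.
  have -> : f + (l * dd) *: e - (y n - c n) + s n *: e = (f' - y n + k) + c n.
    rewrite /s mulrBr scalerBl alg (addrAC f') eq.
    by [].
  by apply: cone_add => //; apply: cone_add.
have scvg : s (phi n) @[n --> \oo] --> 0.
  apply: (@squeeze_cvgr _ _ _ _ (fun=> 0) (fun n => l * d3 * harmonic n)).
  - apply: nearW => n; apply/andP; split.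
      rewrite /s; apply: mulr_ge0; first exact: ltW. rewrite subr_ge0; apply: (@dist_le _ _ M); by case: (vP (phi n)).
    have [_ _ lt] := vP (phi n).
    have hh := @h2 R _ _ (@phi_ge phi phiinc n).
    rewrite /s -mulrA ler_pM2l //.
    have : d3 * harmonic (phi n) <= d3 * harmonic n by rewrite ler_pM2l.
    lra.
  - exact: cvg_cst.
  - rewrite -(mulr0 (l * d3)); apply: cvgM; [exact: cvg_cst | exact: cvg_harmonic].
have lim : (fun n => f + (l * dd) *: e - (y (phi n) - c (phi n)) + s (phi n) *: e)
    @ \oo --> f + (l * dd) *: e - ys + 0 *: e.
  apply: cvgD; first by apply: cvgB => //; exact: cvg_cst.
  by apply: cvgZ => //; exact: cvg_cst.
rewrite scale0r addr0 in lim.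
case: cone => _ _ _ _ clK.
apply: (closed_cvg _ clK _ _ lim).
by apply: nearW => n; exact: Kn.
Qed.
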